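(* Let $d\ge1$, $L>0$, $V\in\mathscr V_N$, and suppose that for some $\theta_d\in[0,\infty)$ there is $\rho\in\mathscr P$, not a.e. equal to $\rho_0$, with $\mathcal F_{\theta_d}(\rho)\le\mathcal F_{\theta_d}(\rho_0)$. Then for every $\theta>\theta_d$, $\rho_0$ is not a minimizer of $\mathcal F_\theta$ over $\mathscr P$.
   Context: $\mathbb T_L^d=\mathbb R^d/(L\mathbb Z)^d$. The class $\mathscr V$ consists of measurable $V:\mathbb R^d\to\mathbb R$ with $V\in L^1(\mathbb R^d)$, $V^-\in L^\infty$, $V(x)=V(-x)$, $V(x)=0$ for $|x|>a$, $0<a<L/2$; $V$ is periodized to $\mathbb T_L^d$ and $\hat V(k)=\int_{\mathbb T_L^d}V(x)e^{-ik\cdot x}dx$ for $k\in(2\pi/L)\mathbb Z^d$. $\mathscr V_N$ is the set of $V\in\mathscr V$ with $\hat V(k)<0$ for some $k\ne0$. $\mathscr P$ = probability densities on $\mathbb T_L^d$, $\rho_0\equiv L^{-d}$. $\mathcal F_\theta(\rho)=\int\rho\log\rho\,dx+\tfrac12\theta L^d\iint V(x-y)\rho(x)\rho(y)\,dx\,dy$ ($+\infty$ if $\rho\log\rho\notin L^1$). *)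

(* Defs.v *)
From HB Require Import structures.
From mathcomp Require Import all_boot all_order all_algebra.
From mathcomp Require Import all_classical all_reals all_analysis.

Set Implicit Arguments.
Unset Strict Implicit.
Unset Printing Implicit Defensive.

Import Order.TTheory GRing.Theory Num.Theory.
Import numFieldNormedType.Exports.

Local Open Scope classical_set_scope.
Local Open Scope ring_scope.

(* Points of R^d are d-tuples of reals, with the product (= Borel)
   sigma-algebra provided by MathComp-Analysis ([measurable_tuple]). *)
Section Defs.
Variable R : realType.
Variable d : nat.

Definition pt := d.-tuple R.

Definition tsub (x y : pt) : pt := [tuple tnth x i - tnth y i | i < d].
Definition topp (x : pt) : pt := [tuple - tnth x i | i < d].

Definition enorm (x : pt) : R := Num.sqrt (\sum_(i < d) tnth x i ^+ 2).

Definition dotp (k x : pt) : R := \sum_(i < d) tnth k i * tnth x i.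

Definition box (a b : pt) : set pt :=
  [set x | forall i : 'I_d, tnth a i <= tnth x i < tnth b i].

(* mu is Lebesgue measure on (the Borel sets of) R^d: it gives every box its
   volume.  Such a measure exists and is unique (boxes form a pi-system
   generating the sigma-algebra, and R^d is sigma-finite for it). *)
Definition is_lebesgue (mu : {measure set pt -> \bar R}) : Prop :=
  forall a b : pt, (forall i : 'I_d, tnth a i <= tnth b i) ->
    mu (box a b) = (\prod_(i < d) (tnth b i - tnth a i))%:E.

(* The torus T_L^d is represented by the fundamental cell [0, L)^d,
   functions on the torus by their restriction to this cell, and the
   Haar/Lebesgue measure of the torus by the restriction of mu to the cell. *)
Definition cell (L : R) : set pt :=
  [set x | forall i : 'I_d, 0 <= tnth x i < L].

Definition wrap (L t : R) : R := t - L * (Num.floor (t / L + 2^-1))%:~R.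

(* For V vanishing outside the closed
   ball of radius a < L/2 (class [V_class]) the periodization
   sum_{k in Z^d} V(z + L k) has exactly one possibly-nonzero term, namely V
   evaluated at the centred representative of z. *)
Definition Vper (L : R) (V : pt -> R) (z : pt) : R :=
  V [tuple wrap L (tnth z i) | i < d].

Definition V_class (mu : {measure set pt -> \bar R}) (L : R) (V : pt -> R)
  : Prop :=
  [/\ mu.-integrable setT (fun x => (V x)%:E),
      (exists M : R, {ae mu, forall x, - M <= V x}),
      (forall x, V x = V (topp x)) &
      exists a : R, [/\ 0 < a, a < L / 2 &
                        forall x, a < enorm x -> V x = 0]].

Definition dual_vec (L : R) (n : d.-tuple int) : pt :=
  [tuple (2 * pi / L) * (tnth n i)%:~R | i < d].

Definition hatV_re (mu : {measure set pt -> \bar R}) (L : R) (V : pt -> R)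
  (k : pt) : \bar R :=
  (\int[mu]_(x in cell L) (Vper L V x * cos (dotp k x))%:E)%E.
Definition hatV_im (mu : {measure set pt -> \bar R}) (L : R) (V : pt -> R)
  (k : pt) : \bar R :=
  (\int[mu]_(x in cell L) (- (Vper L V x * sin (dotp k x)))%:E)%E.

Definition VN_class (mu : {measure set pt -> \bar R}) (L : R) (V : pt -> R)
  : Prop :=
  V_class mu L V /\
  exists n : d.-tuple int, n != [tuple 0 | _ < d] /\
    hatV_im mu L V (dual_vec L n) = 0%E /\
    (hatV_re mu L V (dual_vec L n) < 0)%E.

Definition densities (mu : {measure set pt -> \bar R}) (L : R)
  : set (pt -> R) :=
  [set rho : pt -> R | [/\ measurable_fun (cell L) rho,
                 (forall x, cell L x -> 0 <= rho x) &
                 (\int[mu]_(x in cell L) (rho x)%:E = 1)%E]].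

Definition rho0 (L : R) : pt -> R := fun _ => (L ^+ d)^-1.

(* free energy F_theta; note [ln 0 = 0], so [0 * ln 0 = 0] *)
Definition free_energy (mu : {measure set pt -> \bar R}) (L : R)
  (V : pt -> R) (theta : R) (rho : pt -> R) : \bar R :=
  if `[< mu.-integrable (cell L) (fun x => (rho x * ln (rho x))%:E) >] then
    ((\int[mu]_(x in cell L) (rho x * ln (rho x))%:E) +
     (2^-1 * theta * L ^+ d)%:E *
      \int[mu]_(x in cell L) \int[mu]_(y in cell L)
          (Vper L V (tsub x y) * rho x * rho y)%:E)%E
  else (+oo)%E.

End Defs.

(* Main.v *)
Require Import Defs.
From HB Require Import structures.
From mathcomp Require Import all_boot all_order all_algebra.
From mathcomp Require Import all_classical all_reals all_analysis.
From mathcomp Require Import measurable_realfun.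
From mathcomp Require Import ring lra.
Import Order.TTheory GRing.Theory Num.Theory.
Local Open Scope classical_set_scope.
Local Open Scope ring_scope.
Section A.
Variable R : realType.
Variable d : nat.
Definition prodset (A : 'I_d -> set R) : set (d.-tuple R) :=
  [set x | forall i, A i (tnth x i)].

Lemma prodset_big (A : 'I_d -> set R) :
  prodset A = \big[setI/setT]_(i < d) ((fun x : d.-tuple R => tnth x i) @^-1` A i).
Proof.
rewrite -bigcap_seq; apply/seteqP; split => x /=.
  by move=> Ax i _; exact: Ax.
by move=> Ax i; apply: Ax; rewrite /= mem_index_enum.
Qed.

Lemma measurable_prodset (A : 'I_d -> set R) :
  (forall i, measurable (A i)) -> measurable (prodset A).
Proof.
move=> mA; rewrite prodset_big; apply: bigsetI_measurable => i _.
by rewrite -[X in measurable X]setTI; apply: measurable_tnth.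
Qed.
End A.
Arguments prodset {R d}.
Arguments measurable_prodset {R d}.
Arguments prodset_big {R d}.
Section pmeas.
Local Open Scope ereal_scope.
Context d1 d2 (T1 : measurableType d1) (T2 : measurableType d2) (R : realType).
Variables (m : {measure set T1 -> \bar R}) (S : set T1) (f : T1 -> T2).
Variables (mS : measurable S) (mf : measurable_fun S f).

Definition pmeas (mS' : measurable S) (mf' : measurable_fun S f) : set T2 -> \bar R :=
  fun A => m (S `&` f @^-1` A).

Let pm0 : pmeas mS mf set0 = 0.
Proof. by rewrite /pmeas preimage_set0 setI0 measure0. Qed.

Let pm_ge0 A : 0 <= pmeas mS mf A.
Proof. exact: measure_ge0. Qed.

Let pm_sa : semi_sigma_additive (pmeas mS mf).
Proof.
move=> F mF tF mUF; rewrite /pmeas preimage_bigcup setI_bigcupr.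
apply: measure_semi_sigma_additive.
- by move=> n; exact: mf.
- apply/trivIsetP => /= i j _ _ ij; rewrite setIACA setIid -preimage_setI.
  by move/trivIsetP : tF => /(_ _ _ _ _ ij) ->//; rewrite preimage_set0 setI0.
- by rewrite -setI_bigcupr -preimage_bigcup; exact: mf.
Qed.

HB.instance Definition _ := isMeasure.Build _ _ _
  (pmeas mS mf) pm0 pm_ge0 pm_sa.
End pmeas.
Arguments pmeas {d1 d2 T1 T2 R} m {S f}.

Section oneD.
Variable R : realType.
Local Notation lam := (@lebesgue_measure R).

Lemma lam_refl (b : R) (A : set R) : measurable A ->
  lam ((fun y => b - y) @^-1` A) = lam A.
Proof.
move=> mA.
pose T := measurableTypeR R.
have mf : measurable_fun (setT : set T) ((fun y : R => b - y) : T -> T).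
  by apply: measurable_funB => //; exact: measurable_cst.
have := @lebesgue_measure_unique R (pmeas lam measurableT mf).
move=> /(_ _ A mA) H.
have -> : lam A = pmeas lam measurableT mf A.
  apply: H => _ [[s t] _ <-].
  rewrite /pmeas /=.
  have -> : [set: T] `&` (fun y : R => b - y) @^-1` `]s, t]%classic = `[b - t, b - s[%classic.
    apply/seteqP; split => y; rewrite /= !in_itv /=.
      by move=> [_ /andP[h1 h2]]; apply/andP; split; lra.
    by move=> /andP[h1 h2]; split => //; apply/andP; split; lra.
  rewrite !lebesgue_measure_itv /= !lte_fin.
  have -> : (b - t < b - s) = (s < t).
    by apply/idP/idP => h; lra.
  by case: ifP => // _; rewrite -!EFinD; congr (_%:E); lra.
rewrite /pmeas /=; congr (lam _).
by apply/seteqP; split => y //= [].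
Qed.
End oneD.
Section oneD2.
Variable R : realType.
Local Notation lam := (@lebesgue_measure R).

Lemma wrap_eq (L u : R) (k : int) : 0 < L ->
  -(L/2) <= u + k%:~R * L < L/2 -> Defs.wrap L u = u + k%:~R * L.
Proof.
move=> L0 /andP[h1 h2]; rewrite /Defs.wrap.
have -> : Num.floor (u / L + 2^-1) = - k.
  apply: floor_def; rewrite intrD intrN.
  have hv : u = (u / L) * L by rewrite divfK // gt_eqF.
  set v := u / L in hv *; set K : R := k%:~R in h1 h2 *.
  rewrite hv in h1 h2.
  apply/andP; split; nra.
by rewrite rmorphN /= mulrN opprK mulrC.
Qed.

Lemma measurable_refl (b : R) (E : set R) : measurable E ->
  measurable ((fun y => b - y) @^-1` E).
Proof.
move=> mE; rewrite -[X in measurable X]setTI.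
by apply: (measurable_funB (measurable_cst _) (@measurable_id _ _ _)).
Qed.

Lemma wrap1D (L x : R) (A : set R) : 0 < L -> 0 <= x < L -> measurable A ->
  lam (`[0, L[%classic `&` (fun y => Defs.wrap L (x - y)) @^-1` A) =
  lam (`[-(L/2), L/2[%classic `&` A).
Proof.
move=> L0 /andP[x0 xL] mA.
pose B1 : set R := `[-(L/2), L/2[%classic.
pose J (k : R) : set R := `]x + k * L - L, x + k * L]%classic.
pose Q (k : R) : set R := J k `&` B1 `&` A.
pose P (k : R) : set R := (fun y => (x + k * L) - y) @^-1` Q k.
have mQ k : measurable (Q k).
  by apply: measurableI => //; apply: measurableI; exact: measurable_itv.
have mP k : measurable (P k) by exact: measurable_refl.
have lamP k : lam (P k) = lam (Q k) by exact: lam_refl.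
have dQ k j : k != j -> (k == -1 \/ k == 0 \/ k == 1) -> (j == -1 \/ j == 0 \/ j == 1) ->
    Q k `&` Q j = set0.
  move=> kj hk hj; apply/seteqP; split => // y [[[Jk _] _] [[Jj _] _]].
  move: Jk Jj; rewrite /J /= !in_itv /= => /andP[a1 a2] /andP[b1 b2].
  move: kj hk hj => /eqP kj [/eqP ?|[/eqP ?|/eqP ?]] [/eqP ?|[/eqP ?|/eqP ?]]; subst k j;
    (try lra); by exfalso; apply: kj.
have dP k j : k != j -> (k == -1 \/ k == 0 \/ k == 1) -> (j == -1 \/ j == 0 \/ j == 1) ->
    P k `&` P j = set0.
  move=> kj hk hj; apply/seteqP; split => // y [[[Jk Bk] _] [[Jj Bj] _]].
  move: Jk Jj Bk Bj; rewrite /J /B1 /= !in_itv /= => /andP[a1 a2] /andP[b1 b2] /andP[c1 c2] /andP[e1 e2].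
  move: kj hk hj => /eqP kj [/eqP ?|[/eqP ?|/eqP ?]] [/eqP ?|[/eqP ?|/eqP ?]]; subst k j;
    (try lra); by exfalso; apply: kj.
have hm1 : (-1 : R) == -1 \/ (-1 : R) == 0 \/ (-1 : R) == 1 by left.
have h0 : (0 : R) == -1 \/ (0 : R) == 0 \/ (0 : R) == 1 by right; left.
have h1 : (1 : R) == -1 \/ (1 : R) == 0 \/ (1 : R) == 1 by right; right.
have n10 : (-1 : R) != 0 by rewrite oppr_eq0 oner_neq0.
have n11 : (-1 : R) != 1.
  by rewrite neq_lt; apply/orP; left; lra.
have n01 : (0 : R) != 1 by rewrite eq_sym oner_neq0.
have -> : `[0, L[%classic `&` (fun y => Defs.wrap L (x - y)) @^-1` A = P (-1) `|` P 0 `|` P 1.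
  apply/seteqP; split => y.
    move=> [] /=; rewrite in_itv /= => /andP[y0 yL] Ay.
    have [hlo|hlo] := ltP (x - y) (-(L/2)).
      right; rewrite /P /Q /J /B1 /= !in_itv /=.
      have hw : Defs.wrap L (x - y) = x - y + (1%:~R) * L by apply: wrap_eq => //; rewrite mul1r; apply/andP; split; lra.
      rewrite hw mul1r in Ay; split; [split; apply/andP; split; lra|].
      by rewrite mul1r; have -> : x + L - y = x - y + L by ring.
    have [hhi|hhi] := leP (L/2) (x - y).
      left; left; rewrite /P /Q /J /B1 /= !in_itv /=.
      have hw : Defs.wrap L (x - y) = x - y + ((-1)%:~R) * L by apply: wrap_eq => //; rewrite mulN1r; apply/andP; split; lra.
      rewrite hw mulN1r in Ay; split; [split; apply/andP; split; lra|].
      by rewrite mulN1r; have -> : x - L - y = x - y - L by ring.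
    left; right; rewrite /P /Q /J /B1 /= !in_itv /=.
    have hw : Defs.wrap L (x - y) = x - y + (0%:~R) * L by apply: wrap_eq => //; rewrite mul0r addr0; apply/andP; split; lra.
    rewrite hw mul0r addr0 in Ay; split; [split; apply/andP; split; rewrite ?mul0r ?addr0; lra|].
    by rewrite mul0r addr0.
  rewrite /P /Q /J /B1 /= !in_itv /=.
  move=> [[|]|]; move=> [[/andP[a1 a2] /andP[b1 b2]] Ay]; split; rewrite ?in_itv /=;
    try (apply/andP; split; lra).
  - have hw : Defs.wrap L (x - y) = x - y + ((-1)%:~R) * L by apply: wrap_eq => //; rewrite mulN1r; apply/andP; split; lra.
    by rewrite hw mulN1r; move: Ay; rewrite mulN1r; have -> : x - L - y = x - y - L by ring.
  - have hw : Defs.wrap L (x - y) = x - y + (0%:~R) * L by apply: wrap_eq => //; rewrite mul0r addr0; apply/andP; split; lra.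
    by rewrite hw mul0r addr0; move: Ay; rewrite mul0r addr0.
  - have hw : Defs.wrap L (x - y) = x - y + (1%:~R) * L by apply: wrap_eq => //; rewrite mul1r; apply/andP; split; lra.
    by rewrite hw mul1r; move: Ay; rewrite mul1r; have -> : x + L - y = x - y + L by ring.
have -> : `[-(L/2), L/2[%classic `&` A = Q (-1) `|` Q 0 `|` Q 1.
  apply/seteqP; split => y.
    move=> [] /=; rewrite in_itv /= => /andP[y0 yL] Ay.
    rewrite /Q /J /B1 /= !in_itv /=.
    have [hlo|hlo] := leP y (x - L).
      by left; left; split => //; split; apply/andP; split; lra.
    have [hhi|hhi] := leP y x.
      by left; right; split => //; split; apply/andP; split; lra.
    by right; split => //; split; apply/andP; split; lra.
  by move=> [[|]|] [[_ B] Ay].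
rewrite !measureU //.
- by congr (_ + _ + _); apply: lamP.
- exact: mQ.
- exact: mQ.
- exact: dQ.
- by apply: measurableU; exact: mQ.
- exact: mQ.
- by rewrite setIUl (dQ _ _ n11 hm1 h1) (dQ _ _ n01 h0 h1) setU0.
- exact: mP.
- exact: mP.
- exact: dP.
- by apply: measurableU; exact: mP.
- exact: mP.
- by rewrite setIUl (dP _ _ n11 hm1 h1) (dP _ _ n01 h0 h1) setU0.
Qed.
End oneD2.
Section D.
Variable R : realType.
Variable d : nat.
Local Notation pt := (d.-tuple R).

Definition Gprod : set (set pt) :=
  [set prodset A | A in [set A : 'I_d -> set R | forall i, measurable (A i)]].

Lemma Gprod_setI : setI_closed Gprod.
Proof.
move=> _ _ [A mA <-] [B mB <-]; exists (fun i => A i `&` B i).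
  by move=> i; apply: measurableI.
by apply/seteqP; split => x /=; [move=> h; split => i; case: (h i)|move=> [h1 h2] i; split].
Qed.

Lemma measurable_Gprod : (measurable : set (set pt)) = <<s Gprod >>.
Proof.
apply/seteqP; split => X.
  apply: smallest_sub; first exact: smallest_sigma_algebra.
  move=> Y; rewrite -bigcup_seq => -[i _ [B mB <-]].
  apply: sub_sigma_algebra; exists (fun j => if j == i then B else setT).
    by move=> j; case: ifP.
  apply/seteqP; split => x /=.
    by move=> h; split => //; have := h i; rewrite eqxx.
  by move=> [_ h] j; case: ifPn => // /eqP ->.
apply: smallest_sub; first exact: sigma_algebra_measurable.
by move=> _ [A mA <-]; exact: measurable_prodset.
Qed.
End D.
Section PF.
Variable R : realType.
Variable d : nat.
Local Notation pt := (d.-tuple R).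
Local Notation lam := (@lebesgue_measure R).
Variable mu : {measure set pt -> \bar R}.
Hypothesis hleb : is_lebesgue mu.

Definition Yk (k : nat) (a b : pt) (A : 'I_d -> set R) (i : 'I_d) : set R :=
  if (i < k)%N then A i `&` `[tnth a i, tnth b i[%classic
  else `[tnth a i, tnth b i[%classic.

Lemma lam_co (s t : R) : s <= t -> lam `[s, t[%classic = (t - s)%:E.
Proof.
move=> st; rewrite lebesgue_measure_itv /= lte_fin.
case: ifPn => //; rewrite -leNgt => ts.
have -> : t = s by apply/eqP; rewrite eq_le ts st.
by rewrite subrr.
Qed.

Lemma measurable_Yk k (a b : pt) (A : 'I_d -> set R) : (forall i, measurable (A i)) -> forall i, measurable (Yk k a b A i).
Proof. by move=> mA i; rewrite /Yk; case: ifP => _ //; apply: measurableI. Qed.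

Lemma Yk_sub k (a b : pt) (A : 'I_d -> set R) i : Yk k a b A i `<=` `[tnth a i, tnth b i[%classic.
Proof. by rewrite /Yk; case: ifP => _ // x []. Qed.

Lemma lam_Yk_fin k (a b : pt) (A : 'I_d -> set R) i : (forall i, measurable (A i)) -> tnth a i <= tnth b i ->
  (fine (lam (Yk k a b A i)))%:E = lam (Yk k a b A i).
Proof.
move=> mA hab; apply: fineK; rewrite ge0_fin_numE ?measure_ge0 //.
have h1 : (lam (Yk k a b A i) <= lam `[tnth a i, tnth b i[%classic)%E.
  by apply: le_measure; rewrite ?inE; [exact: measurable_Yk| exact: measurable_itv| exact: Yk_sub].
by apply: (le_lt_trans h1); rewrite lam_co // ltry.
Qed.

Lemma box_prodset (a b : pt) : Defs.box a b = prodset (fun i => `[tnth a i, tnth b i[%classic).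
Proof. by apply/seteqP; split => x /= h i; have := h i; rewrite /= in_itv. Qed.

Lemma mu_box_fin (a b : pt) : (forall i, tnth a i <= tnth b i) -> (mu (Defs.box a b) < +oo)%E.
Proof. by move=> hab; rewrite hleb // ltry. Qed.

Lemma PF k : (k <= d)%N -> forall (a b : pt) (A : 'I_d -> set R), (forall i, tnth a i <= tnth b i) ->
  (forall i, measurable (A i)) ->
  mu (prodset (Yk k a b A)) = (\prod_(i < d) fine (lam (Yk k a b A i)))%:E.
Proof.
elim: k => [|k IH] kd a b A hab mA.
  have -> : prodset (Yk 0 a b A) = Defs.box a b by rewrite box_prodset.
  rewrite hleb //; congr (_%:E); apply: eq_bigr => i _.
  by rewrite /Yk /= lam_co.
have kd' : (k < d)%N by [].
pose kk := Ordinal kd'.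
pose T := measurableTypeR R.
pose I : set R := `[tnth a kk, tnth b kk[%classic.
pose Z := prodset (Yk k a b A).
have mZ : measurable Z by apply: measurable_prodset; exact: measurable_Yk.
have mtk : measurable_fun Z ((fun x : pt => tnth x kk) : pt -> T).
  by apply: measurable_funS (measurable_tnth kk) => //.
have mI : measurable (I : set T) by exact: measurable_itv.
pose c := \prod_(i < d | i != kk) fine (lam (Yk k a b A i)).
have c0 : 0 <= c by apply: prodr_ge0 => i _; apply: fine_ge0; exact: measure_ge0.
have key : forall E : set T, measurable E ->
    mu (Z `&` (fun x : pt => tnth x kk) @^-1` E) = (c%:E * lam (E `&` I))%E.
  move=> E mE.
  have := @measure_unique _ R T (RGenCInfty.G (R:=R)) (fun n => `[-(n%:R), +oo[%classic)
     (RGenCInfty.measurableE R) _ _ _ (pmeas mu mZ mtk) (mscale (NngNum c0) (mrestr lam mI)).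
  move=> H; rewrite -[LHS]/(pmeas mu mZ mtk E) H //.
  - move=> _ _ [x ->] [y ->]; case: (leP x y) => h; [exists y | exists x];
      apply/seteqP; split => z /=; rewrite !in_itv /= !andbT;
      try (by move=> hz; split; lra); by move=> [h1 h2].
  - by move=> n; exists (1 *- n).
  - apply/seteqP; split => // x _; exists (Num.Def.archi_bound (- x)) => //=.
    rewrite in_itv /= andbT lerNl; exact: ltW (unstable.ltr_bound _).
  - move=> _ [r ->]; rewrite /pmeas /mscale /mrestr /=.
    pose v := if r <= tnth a kk then tnth a kk else if r <= tnth b kk then r else tnth b kk.
    pose a' : pt := [tuple if i == kk then v else tnth a i | i < d].
    have ha' i : tnth a' i = if i == kk then v else tnth a i by rewrite tnth_mktuple.
    have hab' i : tnth a' i <= tnth b i.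
      rewrite ha'; case: ifP => [/eqP ->|_] //; rewrite /v; have := hab kk.
      by case: ifP => h1; [|case: ifP => h2]; move=> h3; lra.
    have hY i : i != kk -> Yk k a' b A i = Yk k a b A i.
      by move=> ik; rewrite /Yk ha' (negbTE ik).
    have hkk : (kk < k)%N = false by rewrite ltnn.
    have hv z : (v <= z < tnth b kk) = ((r <= z) && (tnth a kk <= z < tnth b kk)).
      have h3 := hab kk; rewrite /v.
      case: (leP r (tnth a kk)) => h1.
        apply/idP/idP => [/andP[z1 z2]|/andP[z1 /andP[z2 z3]]].
          by apply/andP; split; [lra|apply/andP; split; lra].
        by apply/andP; split; lra.
      case: (leP r (tnth b kk)) => h2.
        apply/idP/idP => [/andP[z1 z2]|/andP[z1 /andP[z2 z3]]].
          by apply/andP; split; [lra|apply/andP; split; lra].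
        by apply/andP; split; lra.
      apply/idP/idP => [/andP[z1 z2]|/andP[z1 /andP[z2 z3]]]; lra.
    have hYkk : Yk k a' b A kk = `[r, +oo[%classic `&` I.
      rewrite /Yk hkk ha' eqxx /I; apply/seteqP; split => z /=; rewrite !in_itv /= ?andbT hv.
        by move=> /andP[z1 z2].
      by move=> [z1 z2]; rewrite z1 z2.
    have hset : Z `&` (fun x : pt => tnth x kk) @^-1` `[r, +oo[%classic = prodset (Yk k a' b A).
      apply/seteqP; split => x /=.
        move=> [hZ hr] i; have [->|ik] := eqVneq i kk.
          rewrite hYkk; split => //; have := hZ kk; rewrite /Yk hkk //.
        by rewrite hY //; exact: hZ.
      move=> hx; split.
        move=> i; have [->|ik] := eqVneq i kk.
          by have := hx kk; rewrite hYkk /Yk hkk => -[].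
        by have := hx i; rewrite hY.
      by have := hx kk; rewrite hYkk => -[].
    change (mu (Z `&` (fun x : pt => tnth x kk) @^-1` `[r, +oo[%classic) = (c%:E * lam (`[r, +oo[%classic `&` I))%E).
    rewrite hset (IH (ltnW kd) a' b A hab' mA) (bigD1 kk) //= hYkk.
    have -> : \prod_(i < d | i != kk) fine (lam (Yk k a' b A i)) = c.
      by apply: eq_bigr => i ik; rewrite hY.
    rewrite EFinM muleC; congr (_ * _)%E; apply: fineK.
    rewrite ge0_fin_numE ?measure_ge0 //.
    have h1 : (lam (`[r, +oo[%classic `&` I) <= lam I)%E.
      by apply: le_measure; rewrite ?inE //; apply: measurableI => //; exact: measurable_itv.
    by apply: (le_lt_trans h1); rewrite /I lam_co // ltry.
  - move=> n; change (mu (Z `&` (fun x : pt => tnth x kk) @^-1` `[1 *- n, +oo[%classic) < +oo)%E.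
    have hb := mu_box_fin a b hab.
    apply: (le_lt_trans _ hb).
    apply: le_measure; rewrite ?inE.
    + by apply: (mtk mZ); exact: measurable_itv.
    + by rewrite box_prodset; apply: measurable_prodset => i; exact: measurable_itv.
    + move=> x [hZ _] i; have := Yk_sub k a b A i _ (hZ i); by rewrite /= in_itv.
have hkk : (kk < k)%N = false by rewrite ltnn.
have hY i : i != kk -> Yk k.+1 a b A i = Yk k a b A i.
  move=> ik; rewrite /Yk ltnS leq_eqVlt.
  have -> : (nat_of_ord i == k) = false.
    by apply/negbTE; apply: contra ik => /eqP h; apply/eqP; apply: val_inj.
  by [].
have hYkk : Yk k.+1 a b A kk = A kk `&` I by rewrite /Yk ltnSn.
have hset : prodset (Yk k.+1 a b A) = Z `&` (fun x : pt => tnth x kk) @^-1` (A kk).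
  apply/seteqP; split => x /=.
    move=> hx; split.
      move=> i; have [->|ik] := eqVneq i kk.
        by have := hx kk; rewrite hYkk /Yk hkk => -[].
      by have := hx i; rewrite hY.
    by have := hx kk; rewrite hYkk => -[].
  move=> [hZ hA] i; have [->|ik] := eqVneq i kk.
    rewrite hYkk; split => //; have := hZ kk; rewrite /Yk hkk //.
  by rewrite hY //; exact: hZ.
rewrite hset (key _ (mA kk)) (bigD1 kk) //= hYkk.
have -> : \prod_(i < d | i != kk) fine (lam (Yk k.+1 a b A i)) = c.
  by apply: eq_bigr => i ik; rewrite hY.
rewrite EFinM muleC; congr (_ * _)%E; apply/esym/fineK.
rewrite ge0_fin_numE ?measure_ge0 //.
have h1 : (lam (A kk `&` I) <= lam I)%E.
  have mAI : measurable (A kk `&` I : set T) := measurableI _ _ (mA kk) mI.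
  by apply: (le_measure (lam : {measure set T -> \bar R}) (x := A kk `&` I) (y := I)); rewrite ?inE // => z [].
by apply: (le_lt_trans h1); rewrite /I lam_co // ltry.
Qed.
End PF.
Arguments Yk {R d}.
Arguments PF {R d mu} hleb [k].
Lemma half_le {R : realType} (L : R) : 0 < L -> -(L/2) <= L/2.
Proof. move=> L0; lra. Qed.

Lemma wrap_range {R : realType} (L t : R) : 0 < L -> -(L/2) <= Defs.wrap L t < L/2.
Proof.
move=> L0; rewrite /Defs.wrap.
have := floor_itv (t / L + 2^-1).
set m := Num.floor _; rewrite intrD /=.
set M : R := m%:~R.
have hv : t = (t / L) * L by rewrite divfK // gt_eqF.
set v := t / L in hv *.
move=> /andP[h1 h2]; rewrite hv; apply/andP; split; nra.
Qed.

Lemma half_le2 {R : realType} (L : R) : 0 < L -> L/2 <= L.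
Proof. move=> L0; lra. Qed.

Section Key.
Variable R : realType.
Variable d : nat.
Local Notation pt := (d.-tuple R).
Local Notation lam := (@lebesgue_measure R).
Variable mu : {measure set pt -> \bar R}.
Hypothesis hleb : is_lebesgue mu.
Variable L : R.
Hypothesis L0 : 0 < L.

Lemma measurable_wrap : measurable_fun setT (Defs.wrap L).
Proof.
rewrite /Defs.wrap.
apply: measurable_funB => //.
apply: measurable_funM; first exact: measurable_cst.
have -> : (fun x : R => ((Num.floor (x / L + 2^-1))%:~R : R)) =
   (fun t : R => ((Num.floor t)%:~R : R)) \o (fun x : R => x / L + 2^-1) by [].
apply: measurableT_comp.
  apply: nondecreasing_measurable => // s t st.
  by rewrite ler_int; exact: le_floor.
apply: measurable_funD; last exact: measurable_cst.
exact: mulrr_measurable.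
Qed.

Definition Tx (x : pt) : pt -> pt :=
  fun y => [tuple Defs.wrap L (tnth x i - tnth y i) | i < d].

Lemma measurable_Tx x : measurable_fun setT (Tx x).
Proof.
apply/measurable_fun_tnthP => i.
have -> : (tnth (T:=R))^~ i \o Tx x = Defs.wrap L \o (fun y : pt => tnth x i - tnth y i).
  by apply: funext => y /=; rewrite tnth_mktuple.
apply: measurableT_comp; first exact: measurable_wrap.
apply: measurable_funB; first exact: measurable_cst.
exact: measurable_tnth.
Qed.

Definition Bset : set pt := prodset (fun _ => `[-(L/2), L/2[%classic).
Definition ztup : pt := [tuple 0 | _ < d].
Definition Ltup : pt := [tuple L | _ < d].

Lemma cell_prodset : Defs.cell L = prodset (fun _ => `[0, L[%classic) :> set pt.
Proof. by apply/seteqP; split => x /= h i; have := h i; rewrite /= in_itv. Qed.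

Lemma measurable_cell : measurable (Defs.cell L : set pt).
Proof. by rewrite cell_prodset; apply: measurable_prodset => i; exact: measurable_itv. Qed.

Lemma measurable_Bset : measurable Bset.
Proof. by apply: measurable_prodset => i; exact: measurable_itv. Qed.

Lemma cell_box : Defs.cell L = Defs.box ztup Ltup :> set pt.
Proof.
apply/seteqP; split => x /= h i; have := h i; by rewrite !tnth_mktuple.
Qed.

Lemma mu_cell : mu (Defs.cell L) = ((L ^+ d)%:E)%E.
Proof.
rewrite cell_box hleb; last by move=> i; rewrite !tnth_mktuple; exact: ltW.
congr (_%:E); rewrite (eq_bigr (fun _ => L)); last by move=> i _; rewrite !tnth_mktuple subr0.
by rewrite prodr_const card_ord.
Qed.

Lemma key x : Defs.cell L x -> forall A, measurable A ->
  mu (Defs.cell L `&` Tx x @^-1` A) = mu (Bset `&` A).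
Proof.
move=> hx A mA.
have mTxc : measurable_fun (Defs.cell L) (Tx x).
  exact: measurable_funS (measurable_Tx x).
have := @measure_unique _ R _ (Gprod R d) (fun _ => setT) (measurable_Gprod R d) (@Gprod_setI R d)
   _ _ (pmeas mu measurable_cell mTxc) (mrestr mu measurable_Bset).
move=> H.
rewrite -[LHS]/(pmeas mu measurable_cell mTxc A) (H _ _ _ _ A mA).
- by change (mu (A `&` Bset) = mu (Bset `&` A)); rewrite setIC.
- move=> _; exists (fun _ => setT) => //.
  by apply/seteqP; split.
- by apply/seteqP; split => // y _; exists 0%N.
- move=> _ [A' mA' <-].
  change (mu (Defs.cell L `&` Tx x @^-1` prodset A') = mu (prodset A' `&` Bset)).
  pose A1 i : set R := (fun y => Defs.wrap L (tnth x i - y)) @^-1` A' i.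
  have mA1 i : measurable (A1 i).
    rewrite -[X in measurable X]setTI; apply: (_ : measurable_fun setT _) => //.
    apply: measurableT_comp; first exact: measurable_wrap.
    by apply: measurable_funB; [exact: measurable_cst|exact: measurable_id].
  have hz i : tnth ztup i <= tnth Ltup i by rewrite !tnth_mktuple; exact: ltW.
  pose mh : pt := [tuple -(L/2) | _ < d].
  pose h : pt := [tuple L/2 | _ < d].
  have hh i : tnth mh i <= tnth h i by rewrite !tnth_mktuple; exact: half_le.
  have -> : Defs.cell L `&` Tx x @^-1` prodset A' = prodset (Yk d ztup Ltup A1).
    apply/seteqP; split => y /=.
      move=> [hc hA] i; rewrite /Yk ltn_ord /A1 /= !tnth_mktuple in_itv /=.
      by split; [have := hA i; rewrite tnth_mktuple | exact: hc].
    move=> hy; split => i; have := hy i; rewrite /Yk ltn_ord /A1 /= !tnth_mktuple in_itv /=.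
      by move=> [].
    by move=> [].
  have -> : prodset A' `&` Bset = prodset (Yk d mh h A').
    apply/seteqP; split => y /=.
      move=> [hA hB] i; rewrite /Yk ltn_ord /= !tnth_mktuple; split => //.
      by have := hB i; rewrite /= in_itv.
    move=> hy; split => i; have := hy i; rewrite /Yk ltn_ord /= !tnth_mktuple.
      by move=> [].
    by move=> [] _; rewrite /= in_itv.
  rewrite (PF hleb (leqnn d) ztup Ltup A1 hz mA1) (PF hleb (leqnn d) mh h A' hh mA').
  congr (_%:E); apply: eq_bigr => i _.
  rewrite /Yk ltn_ord /A1 !tnth_mktuple setIC wrap1D //.
  by rewrite setIC.

- move=> _; change (mu (Defs.cell L `&` Tx x @^-1` setT) < +oo)%E.
  rewrite preimage_setT setIT mu_cell; exact: ltry.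
Qed.

Hypothesis dpos : (0 < d)%N.

Lemma transfer0 x : Defs.cell L x -> forall f : pt -> \bar R,
  measurable_fun setT f -> (forall y, (0 <= f y)%E) ->
  (\int[mu]_(y in Defs.cell L) f (Tx x y) = \int[mu]_(y in Bset) f y)%E.
Proof.
move=> hx f mf f0.
pose T' := fun y => if y \in (Defs.cell L : set pt) then Tx x y else Ltup.
have mT' : measurable_fun setT T'.
  apply: measurable_fun_ifT.
  - apply: (measurable_fun_bool true); rewrite setTI.
    have -> : (fun y => y \in (Defs.cell L : set pt)) @^-1` [set true] = Defs.cell L.
      by apply/seteqP; split => y /=; [move/set_mem|move/mem_set].
    exact: measurable_cell.
  - exact: measurable_Tx.
  - exact: measurable_cst.
have LB : ~ Bset Ltup.
  move=> /(_ (Ordinal dpos)); rewrite tnth_mktuple /= in_itv /=.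
  by move=> /andP[_]; rewrite ltNge (half_le2 _ L0).
have TB y : Bset (Tx x y) by move=> i; rewrite tnth_mktuple /= in_itv /=; exact: wrap_range.
have preB : T' @^-1` Bset = Defs.cell L.
  apply/seteqP; split => y /=; rewrite /T'; case: ifPn => [/set_mem //|].
    by move=> _ /LB.
  by move=> /negP hy hc; exfalso; apply: hy; exact/mem_set.
have := ge0_integral_pushforward mT' mu measurable_Bset (measurable_funS measurableT (@subsetT _ Bset) mf) (fun y _ => f0 y).
rewrite preB => H.
have -> : (\int[mu]_(y in Defs.cell L) f (Tx x y) = \int[mu]_(y in Defs.cell L) (f \o T') y)%E.
  apply: eq_integral => y hy; rewrite /= /T' hy //.
rewrite -H; apply: (eq_measure_integral mu) => A mA AB.
change (mu (T' @^-1` A) = mu A).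
have -> : T' @^-1` A = Defs.cell L `&` Tx x @^-1` A.
  apply/seteqP; split => y /=.
    rewrite /T'; case: ifPn => [/set_mem hc hA|hc hA]; first by split.
    by exfalso; apply: LB; exact: AB.
  by move=> [hc hA]; rewrite /T' mem_set.
by rewrite key // setIidr.
Qed.

Lemma transfer x : Defs.cell L x -> forall f : pt -> R, measurable_fun setT f ->
  (\int[mu]_(y in Defs.cell L) (f (Tx x y))%:E = \int[mu]_(y in Bset) (f y)%:E)%E.
Proof.
move=> hx f mf.
have mF : measurable_fun setT (fun y => (f y)%:E) by exact/measurable_EFinP.
rewrite integralE [RHS]integralE.
have -> : (fun y => (f (Tx x y))%:E) = (fun y => (f y)%:E) \o Tx x by [].
rewrite funepos_comp funeneg_comp.
rewrite (transfer0 x hx _ (measurable_funepos mF) (funepos_ge0 _)).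
by rewrite (transfer0 x hx _ (measurable_funeneg mF) (funeneg_ge0 _)).
Qed.
End Key.
Lemma xlnx_ineq {R : realType} (x c : R) : 0 <= x -> 0 < c ->
  0 <= x * ln x - x * ln c - x + c /\ (x * ln x - x * ln c - x + c = 0 -> x = c).
Proof.
move=> x0 c0.
have [->|xpos] := eqVneq x 0.
  rewrite !mul0r; split; first lra.
  move=> h; lra.
have xp : 0 < x by rewrite lt_neqAle eq_sym xpos x0.
pose t := c / x.
have tp : 0 < t by rewrite divr_gt0.
have hc : c = x * t by rewrite /t mulrC divfK // gt_eqF.
have lc : ln c = ln x + ln t by rewrite hc lnM // posrE.
have ht : ln t <= t - 1.
  have := expR_ge1Dx (ln t); rewrite lnK ?posrE //; lra.
have E : x * ln x - x * ln c - x + c = x * (t - 1 - ln t) by rewrite lc hc; ring.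
rewrite E; split; first by apply: mulr_ge0 => //; lra.
move=> /eqP; rewrite mulf_eq0 gt_eqF //= => /eqP h0.
have hl : ln t = 0.
  apply/eqP/negPn/negP => hne.
  have := expR_gt1Dx hne; rewrite lnK ?posrE //; lra.
have : t = 1 by move/eqP: hl; rewrite ln_eq0 // => /eqP.
by move=> t1; rewrite hc t1 mulr1.
Qed.

Section Entropy.
Local Open Scope ereal_scope.
Context d (T : measurableType d) (R : realType).
Variable mu : {measure set T -> \bar R}.
Variable D : set T.
Hypothesis mD : measurable D.
Variable m : R.
Hypothesis m0 : (0 < m)%R.
Hypothesis muD : mu D = m%:E.

Lemma integrable_cstD (k : R) : mu.-integrable D (fun _ => k%:E).
Proof.
apply/integrableP; split; first exact: measurable_cst.
rewrite (eq_integral (fun _ => `|k|%:E)) //.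
by rewrite (integral_cst mu mD) muD -EFinM ltry.
Qed.

Lemma entropy_strict (rho : T -> R) :
  measurable_fun D rho -> (forall x, D x -> (0 <= rho x)%R) ->
  \int[mu]_(x in D) (rho x)%:E = 1 ->
  mu.-integrable D (fun x => ((rho x * ln (rho x))%R)%:E) ->
  ~ {ae mu, forall x, D x -> rho x = (m^-1)%R} ->
  (ln (m^-1)%R)%:E < \int[mu]_(x in D) ((rho x * ln (rho x))%R)%:E.
Proof.
move=> mrho rho0 int1 ient nae.
pose c := (m^-1)%R.
have c0 : (0 < c)%R by rewrite invr_gt0.
have irho : mu.-integrable D (fun x => (rho x)%:E).
  apply/integrableP; split; first exact/measurable_EFinP.
  rewrite (eq_integral (fun x => (rho x)%:E)); first by rewrite int1 ltry.
  by move=> x /set_mem Dx; rewrite gee0_abs // lee_fin rho0.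
pose g x := (rho x * ln (rho x) - rho x * ln c - rho x + c)%R.
have gE x : (g x)%:E = ((rho x * ln (rho x))%R)%:E + ((((- ln c - 1) * rho x)%R)%:E + c%:E).
  by rewrite -!EFinD; congr (_%:E); rewrite /g; ring.
have i2 : mu.-integrable D (fun x => (((- ln c - 1) * rho x)%R)%:E).
  under eq_fun do rewrite EFinM.
  exact: integrableZl.
have i3 := integrable_cstD c.
have intg : \int[mu]_(x in D) (g x)%:E =
    \int[mu]_(x in D) ((rho x * ln (rho x))%R)%:E - (ln c)%:E.
  under eq_integral do rewrite gE.
  rewrite integralD //; last exact: integrableD.
  rewrite integralD //.
  rewrite [X in _ + (X + _)](_ : _ = ((- ln c - 1)%R)%:E * \int[mu]_(x in D) (rho x)%:E); last first.
    by rewrite -integralZl //; apply: eq_integral => x _; rewrite EFinM.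
  rewrite int1 mule1 (integral_cst mu mD) muD -EFinM.
  rewrite /c mulVf ?gt_eqF //.
  have := integrable_fin_num mD ient; case: (\int[mu]_(x in D) _) => // s _.
  by rewrite -!EFinD; congr (_%:E); ring.
rewrite ltNge; apply/negP => hle; apply: nae.
have g0 x : D x -> (0 <= g x)%R by move=> Dx; exact: (xlnx_ineq _ _ (rho0 x Dx) c0).1.
have hint0 : \int[mu]_(x in D) (g x)%:E = 0.
  apply/eqP; rewrite eq_le; apply/andP; split.
    rewrite intg; move: hle; have := integrable_fin_num mD ient.
    case: (\int[mu]_(x in D) _) => // s _; rewrite /c !lee_fin => h.
    by rewrite subr_le0.
  by apply: integral_ge0 => x Dx; rewrite lee_fin g0.
have mg : measurable_fun D (fun x => (g x)%:E).
  have m1 : measurable_fun D (fun x => (rho x * ln (rho x))%R).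
    by apply/measurable_EFinP; exact: (measurable_int _ ient).
  apply/measurable_EFinP; rewrite /g.
  apply: measurable_funD; last exact: measurable_cst.
  apply: measurable_funB => //; apply: measurable_funB => //.
  by apply: measurable_funM => //; exact: measurable_cst.
have : \int[mu]_(x in D) `|(g x)%:E| = 0.
  rewrite -hint0; apply: eq_integral => x /set_mem Dx.
  by rewrite gee0_abs // lee_fin g0.
move/(ae_eq_integral_abs mu mD mg).
apply: filterS => x h Dx.
have := h Dx; rewrite /cst => /eqP; rewrite eqe => /eqP hg.
exact: (xlnx_ineq _ _ (rho0 x Dx) c0).2.
Qed.
End Entropy.

Lemma final_arith {R : realType} (s lc r K td t P0 : R) :
  0 <= td -> td < t -> 0 < P0 -> lc < s ->
  s + 2^-1 * td * P0 * r <= lc + 2^-1 * td * P0 * K ->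
  lc + 2^-1 * t * P0 * K <= s + 2^-1 * t * P0 * r -> False.
Proof.
move=> td0 tt P00 ls.
have e q z : 2^-1 * q * P0 * z = q * (P0 / 2) * z by ring.
rewrite !e; set P := P0 / 2.
have P0' : 0 < P by rewrite /P; lra.
move=> h1 h2.
have hw : P * (K - r) <= 0.
  rewrite leNgt; apply/negP => hp.
  have : (t - td) * (P * (K - r)) <= 0 by nra.
  have : 0 < (t - td) * (P * (K - r)) by apply: mulr_gt0 => //; lra.
  lra.
have : td * (P * (K - r)) <= 0 by nra.
nra.
Qed.

Theorem proposition2p5 (R : realType) (d : nat)
  (mu : {measure set (d.-tuple R) -> \bar R}) (L : R) (V : d.-tuple R -> R)
  (theta_d : R) :
  (0 < d)%N -> is_lebesgue mu -> 0 < L -> VN_class mu L V -> 0 <= theta_d ->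
  (exists rho, densities mu L rho /\
     ~ {ae mu, forall x, cell L x -> rho x = @rho0 R d L x} /\
     (free_energy mu L V theta_d rho <= free_energy mu L V theta_d (@rho0 R d L))%E) ->
  forall theta : R, theta_d < theta ->
    ~ (forall rho, densities mu L rho ->
         (free_energy mu L V theta (@rho0 R d L) <= free_energy mu L V theta rho)%E).
Proof.
move=> dpos hleb L0 [[iV _ _ _] _] th0 [rho [[mrho rho_ge0 int1] [nae hle]]] theta hth Hmin.
have Ld0 : 0 < L ^+ d by apply: exprn_gt0.
pose c := (L ^+ d)^-1.
have c0 : 0 < c by rewrite invr_gt0.
have mcell := measurable_cell R d L.
have mucell := mu_cell R d mu hleb L L0.
have mV : measurable_fun setT V.
  by apply/measurable_EFinP; exact: (measurable_int _ iV).
pose jj := fine (\int[mu]_(z in Bset R d L) (((c * c) * V z)%R)%:E)%E.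
have iVB : mu.-integrable (Bset R d L) (fun z => (((c * c) * V z)%R)%:E).
  under eq_fun do rewrite EFinM.
  apply: integrableZl; first exact: (measurable_Bset R d L).
  exact: (integrableS measurableT (measurable_Bset R d L) (@subsetT _ _) iV).
have jjE : (\int[mu]_(z in Bset R d L) (((c * c) * V z)%R)%:E)%E = jj%:E.
  by rewrite fineK //; apply: integrable_fin_num => //; exact: measurable_Bset.
have E0 : (\int[mu]_(x in cell L) \int[mu]_(y in cell L)
     (Vper L V (tsub x y) * rho0 L x * rho0 L y)%:E)%E = (jj * L ^+ d)%:E.
  transitivity (\int[mu]_(x in cell L) (cst jj%:E) x)%E.
    apply: eq_integral => x /set_mem hx.
    rewrite -jjE -(transfer R d mu hleb L L0 dpos x hx); last first.
      by apply: measurable_funM => //; exact: measurable_cst.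
    apply: eq_integral => y _; congr (_%:E).
    have hV : Vper L V (tsub x y) = V (Tx R d L x y).
      rewrite /Vper; congr (V _); apply: eq_mktuple => i.
      by rewrite /tsub tnth_mktuple.
    rewrite /rho0 -/c hV; ring.
  by rewrite (integral_cst mu mcell) mucell -EFinM.
have i0 : mu.-integrable (cell L) (fun x => (rho0 L x * ln (rho0 L x))%:E).
  exact: (integrable_cstD _ _ _ mu _ mcell (L ^+ d) mucell (c * ln c)).
have S0 : (\int[mu]_(x in cell L) (rho0 L x * ln (rho0 L x))%:E)%E = (ln c)%:E.
  transitivity (\int[mu]_(x in cell L) (cst (c * ln c)%:E) x)%E; first by [].
  rewrite (integral_cst mu mcell) mucell -EFinM; congr (_%:E).
  by rewrite mulrAC /c mulVf ?gt_eqF // mul1r.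
have F0 th : free_energy mu L V th (rho0 L) =
    (ln c + 2^-1 * th * L ^+ d * (jj * L ^+ d))%:E.
  by rewrite /free_energy asboolT // S0 E0 -EFinM -EFinD.
move: hle; rewrite F0 /free_energy; case: asboolP => irho; last by rewrite leye_eq.
move=> hle.
have H := Hmin rho (And3 mrho rho_ge0 int1).
move: H; rewrite F0 /free_energy asboolT // => H.
have hstrict := entropy_strict _ _ _ mu _ mcell (L ^+ d) Ld0 mucell rho mrho rho_ge0 int1 irho nae.
move: hle H hstrict; have := integrable_fin_num mcell irho.
case: (\int[mu]_(x in cell L) (rho x * ln (rho x))%:E)%E => // s _.
case: (\int[mu]_(x in cell L) \int[mu]_(y in cell L) _)%E => [r| |] hle H hst.
- rewrite -!EFinM -!EFinD !lee_fin in hle H; rewrite lte_fin in hst.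
  exact: (@final_arith R s (ln c) r (jj * L ^+ d) theta_d theta (L ^+ d) th0 hth Ld0 hst hle H).
- have [td0|td0] := eqVneq theta_d 0.
    move: hle; rewrite td0 !mulr0 mul0r mul0e adde0 lee_fin.
    rewrite mul0r addr0 => hle; move: hst; rewrite lte_fin => hst.
    by have := lt_le_trans hst hle; rewrite /c ltxx.
  have tdp : 0 < 2^-1 * theta_d * L ^+ d.
    by rewrite mulr_gt0 // mulr_gt0 // ?invr_gt0 // lt_neqAle eq_sym td0 th0.
  by move: hle; rewrite mulry gtr0_sg // mul1e addey // leye_eq.
- have tp : 0 < 2^-1 * theta * L ^+ d.
    by rewrite mulr_gt0 // mulr_gt0 // ?invr_gt0 //; exact: le_lt_trans th0 hth.
  by move: H; rewrite mulrNy gtr0_sg // mul1e addeNy // leeNy_eq.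
Qed.
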